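(* Let $G_{FL}=(\omega^{<\omega},c_{00}(\omega))$. For all finite games $A$ and $B$, every game embedding $g\colon A\to B$ and every game embedding $f\colon A\to G_{FL}$, there is a game embedding $h\colon B\to G_{FL}$ with $h\circ g=f$. (That is, $G_{FL}$ is injective, in the category of games with game embeddings, with respect to all game embeddings between finite games.)
   Context: For a set $M$, $M^{<\omega}=\bigcup_{n<\omega}M^n$ is the set of finite sequences in $M$; $|t|$ denotes the length of $t$, $t\restriction k$ its initial segment of length $k$, $t^\frown x$ the extension of $t$ by the element $x$, and $\langle\rangle$ the empty sequence. A game tree is a set $T\subseteq M^{<\omega}$ (for some set $M$) such that (i) if $t\in T$ and $k\le |t|$ then $t\restriction k\in T$, and (ii) for every $t\in T$ there is $x$ with $t^\frown x\in T$. $\mathrm{Run}(T)=\{R\in M^\omega: R\restriction n\in T\text{ for all }n<\omega\}$. A game is a pair $G=(T,A)$ with $T$ a game tree and $A\subseteq\mathrm{Run}(T)$ (runs in $A$ are won by Alice, the other runs by Bob). A game $(T,A)$ is finite if $\mathrm{Run}(T)$ is finite. A map $f\colon T_1\to T_2$ between game trees is chronological if $|f(t)|=|t|$ and $f(t\restriction k)=f(t)\restriction k$ for all $t\in T_1$, $k\le|t|$; it induces $\bar f\colon\mathrm{Run}(T_1)\to\mathrm{Run}(T_2)$ with $\bar f(R)\restriction n=f(R\restriction n)$. For games $G_i=(T_i,A_i)$, a chronological $f\colon T_1\to T_2$ is an A-morphism $G_1\to G_2$ if $\bar f[A_1]\subseteq A_2$, a B-morphism if $\bar f[\mathrm{Run}(T_1)\setminus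 A_1]\subseteq \mathrm{Run}(T_2)\setminus A_2$, and a game embedding if it is injective and both an A-morphism and a B-morphism. $c_{00}(\omega)$ denotes the set of eventually zero sequences in $\omega^\omega$; note $\mathrm{Run}(\omega^{<\omega})=\omega^\omega$. *)

(* Defs.v *)
From Stdlib Require Import List Arith.
Import ListNotations.
Set Implicit Arguments.

Definition prefix {M : Type} (R : nat -> M) (n : nat) : list M :=
  map R (seq 0 n).

Definition is_game_tree {M : Type} (T : list M -> Prop) : Prop :=
  (forall t k, T t -> k <= length t -> T (firstn k t)) /\
  (forall t, T t -> exists x, T (t ++ [x])).

Definition Run {M : Type} (T : list M -> Prop) (R : nat -> M) : Prop :=
  forall n, T (prefix R n).

Record Game := {
  gM : Type;
  gT : list gM -> Prop;
  gA : (nat -> gM) -> Prop;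
  gT_tree : is_game_tree gT;
  gA_runs : forall R, gA R -> Run gT R
}.

Definition finite_game (G : Game) : Prop :=
  exists l : list (nat -> gM G),
    forall R, Run (gT G) R -> exists R', In R' l /\ forall n, R n = R' n.

Definition chronological (G1 G2 : Game) (f : list (gM G1) -> list (gM G2)) : Prop :=
  forall t, gT G1 t ->
    gT G2 (f t) /\ length (f t) = length t /\
    forall k, k <= length t -> f (firstn k t) = firstn k (f t).

Definition induced_run {M1 M2 : Type} (f : list M1 -> list M2)
  (R : nat -> M1) (S : nat -> M2) : Prop :=
  forall n, prefix S n = f (prefix R n).

Definition A_morphism (G1 G2 : Game) (f : list (gM G1) -> list (gM G2)) : Prop :=
  chronological G1 G2 f /\
  forall R S, Run (gT G1) R -> induced_run f R S -> gA G1 R -> gA G2 S.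

Definition B_morphism (G1 G2 : Game) (f : list (gM G1) -> list (gM G2)) : Prop :=
  chronological G1 G2 f /\
  forall R S, Run (gT G1) R -> induced_run f R S -> ~ gA G1 R -> ~ gA G2 S.

Definition game_embedding (G1 G2 : Game) (f : list (gM G1) -> list (gM G2)) : Prop :=
  chronological G1 G2 f /\
  (forall s t, gT G1 s -> gT G1 t -> f s = f t -> s = t) /\
  A_morphism G1 G2 f /\ B_morphism G1 G2 f.

Definition c00 (R : nat -> nat) : Prop :=
  exists N, forall n, N <= n -> R n = 0.

Lemma full_tree_is_game_tree : is_game_tree (fun _ : list nat => True).
Proof. split; [auto | intros t _; exists 0; exact I]. Qed.

Lemma c00_runs : forall R, c00 R -> Run (fun _ : list nat => True) R.
Proof. intros R _ n; exact I. Qed.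

Definition G_FL : Game :=
  {| gM := nat; gT := fun _ => True; gA := c00;
     gT_tree := full_tree_is_game_tree; gA_runs := c00_runs |}.

(* Main.v *)
Require Import Defs.
From Stdlib Require Import List Arith Lia ClassicalEpsilon FunctionalExtensionality Classical.
Import ListNotations.

Lemma prefix_S {M} (R: nat->M) n : prefix R (S n) = prefix R n ++ [R n].
Proof. unfold prefix. rewrite seq_S, map_app. reflexivity. Qed.

Lemma prefix_length {M} (R: nat->M) n : length (prefix R n) = n.
Proof. unfold prefix. rewrite length_map, length_seq. reflexivity. Qed.

Lemma firstn_snoc {M} (l : list M) x k : k <= length l -> firstn k (l ++ [x]) = firstn k l.
Proof. intros H. rewrite firstn_app. replace (k - length l) with 0 by lia. simpl. apply app_nil_r. Qed.

Lemma firstn_prefix {M} (R: nat->M) k n : k <= n -> firstn k (prefix R n) = prefix R k.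
Proof.
  induction n; intros H.
  - replace k with 0 by lia. reflexivity.
  - destruct (Nat.eq_dec k (S n)) as [->|Hk].
    + apply firstn_all2. rewrite prefix_length; lia.
    + rewrite prefix_S, firstn_snoc by (rewrite prefix_length; lia). apply IHn. lia.
Qed.

Lemma firstn_S_nth {M} (l : list M) n d : n < length l -> firstn (S n) l = firstn n l ++ [nth n l d].
Proof.
  revert n; induction l; intros n H; simpl in *. lia.
  destruct n; simpl. reflexivity. rewrite IHl by lia. reflexivity.
Qed.

Lemma prefix_eq_firstn {M} (R : nat -> M) (l : list M) d n :
  (forall i, i < n -> R i = nth i l d) -> n <= length l -> prefix R n = firstn n l.
Proof.
  induction n; intros H1 H2. reflexivity.
  rewrite prefix_S, IHn; [|intros; apply H1; lia|lia].
  rewrite (firstn_S_nth l n d) by lia. rewrite H1 by lia. reflexivity.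
Qed.

Lemma nth_prefix {M} (R: nat->M) n i d : i < n -> nth i (prefix R n) d = R i.
Proof. intros H. unfold prefix. rewrite nth_indep with (d' := R 0) by (rewrite length_map, length_seq; lia).
  rewrite map_nth, seq_nth by lia. reflexivity. Qed.

Lemma run_through {M} (T: list M -> Prop) : is_game_tree T -> forall t, T t ->
  exists R, Run T R /\ prefix R (length t) = t.
Proof.
  intros [Hc He] t Ht.
  destruct (He t Ht) as [m0 _].
  pose (next := fun u : list M => match excluded_middle_informative (exists x, T (u++[x])) with
     | left p => proj1_sig (constructive_indefinite_description _ p) | right _ => m0 end).
  assert (Hnext : forall u, T u -> T (u ++ [next u])).
  { intros u Hu. unfold next. destruct excluded_middle_informative as [p|n].
    - exact (proj2_sig (constructive_indefinite_description _ p)).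
    - exfalso; apply n, He, Hu. }
  pose (L := fix L k := match k with 0 => t | S k => L k ++ [next (L k)] end).
  assert (HT : forall k, T (L k)) by (induction k; simpl; auto).
  assert (Hlen : forall k, length (L k) = length t + k).
  { induction k; simpl. lia. rewrite length_app, IHk; simpl; lia. }
  assert (Hpre : forall j k, j <= k -> firstn (length t + j) (L k) = L j).
  { intros j k; induction k; intros Hjk.
    - replace j with 0 by lia. rewrite Nat.add_0_r. apply firstn_all2. rewrite Hlen; lia.
    - destruct (Nat.eq_dec j (S k)) as [->|Hne].
      + apply firstn_all2. rewrite Hlen; lia.
      + simpl. rewrite firstn_snoc by (rewrite Hlen; lia). apply IHk; lia. }
  assert (Hnth : forall i k, i < length t + k -> nth i (L k) m0 = nth i (L (S i)) m0).
  { intros i k Hi. destruct (le_lt_dec (S i) k) as [Hle|Hlt].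
    - rewrite <- (Hpre (S i) k Hle). rewrite nth_firstn. destruct (Nat.ltb_spec i (length t + S i)); [reflexivity|lia].
    - rewrite <- (Hpre k (S i)) by lia. rewrite nth_firstn. destruct (Nat.ltb_spec i (length t + k)); [reflexivity|lia]. }
  exists (fun n => nth n (L (S n)) m0).
  assert (Hp : forall n k, n <= length t + k -> prefix (fun n => nth n (L (S n)) m0) n = firstn n (L k)).
  { intros n k Hn. apply prefix_eq_firstn with (d := m0). intros i Hi. symmetry. apply Hnth. lia.
    rewrite Hlen; lia. }
  split.
  - intros n. rewrite (Hp n n) by lia. apply Hc. apply HT. rewrite Hlen; lia.
  - rewrite (Hp _ 0) by lia. apply firstn_all2. pose proof (Hlen 0) as H0. simpl in H0 |- *. lia.
Qed.

Lemma sep_one {X} (a : nat -> X) (l : list (nat->X)) :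
  exists N, forall b, In b l -> (forall n, n < N -> a n = b n) -> a = b.
Proof.
  induction l as [|b0 l IH]. exists 0; intros b [].
  destruct IH as [N' HN'].
  destruct (classic (a = b0)) as [E|E].
  - exists N'. intros b [<-|Hb] H; auto.
  - assert (exists n, a n <> b0 n) as [n Hn].
    { apply not_all_ex_not. intros Hall. apply E, functional_extensionality, Hall. }
    exists (max N' (S n)). intros b [<-|Hb] H.
    + exfalso. apply Hn, H. lia.
    + apply HN'; auto. intros; apply H; lia.
Qed.

Lemma sep_all {X} (l : list (nat->X)) :
  exists N, forall a b, In a l -> In b l -> (forall n, n < N -> a n = b n) -> a = b.
Proof.
  induction l as [|a0 l IH]. exists 0; intros a b [].
  destruct IH as [N' HN']. destruct (sep_one a0 l) as [N1 HN1].
  exists (max N' N1). intros a b [<-|Ha] [<-|Hb] H; auto.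
  - apply HN1; auto. intros; apply H; lia.
  - symmetry. apply HN1; auto. intros; symmetry; apply H; lia.
  - apply HN'; auto. intros; apply H; lia.
Qed.

Lemma le_fold {X} (F : X -> nat) (l : list X) x : In x l ->
  F x <= fold_right (fun y m => max (F y) m) 0 l.
Proof. induction l; simpl. intros []. intros [<-|H]; [lia|]. specialize (IHl H). lia. Qed.

Section Constr.
Variables A B : Game.
Variables (g : list (gM A) -> list (gM B)) (f : list (gM A) -> list nat).
Variables (lA : list (nat -> gM A)) (lB : list (nat -> gM B)) (N : nat).
Hypothesis HA : forall R, Run (gT A) R -> In R lA.
Hypothesis HB : forall R, Run (gT B) R -> In R lB.
Hypothesis HN : forall a b, In a lB -> In b lB -> (forall n, n < N -> a n = b n) -> a = b.
Hypothesis Hg : game_embedding A B g.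
Hypothesis Hf : game_embedding A G_FL f.

Definition img (u : list (gM B)) : Prop := exists s, gT A s /\ g s = u.

Definition Mb (n : nat) : nat :=
  fold_right (fun R m => max (nth (n-1) (f (prefix R n)) 0) m) 0 lA.

Definition idx (u : list (gM B)) : nat :=
  match excluded_middle_informative
     (exists i, exists R, nth_error lB i = Some R /\ prefix R (length u) = u) with
  | left p => proj1_sig (constructive_indefinite_description _ p)
  | right _ => 0 end.

Definition val (u : list (gM B)) : nat :=
  match excluded_middle_informative (img u) with
  | left p => nth (length u - 1) (f (proj1_sig (constructive_indefinite_description _ p))) 0
  | right _ =>
    if excluded_middle_informative (img (firstn (length u - 1) u)) then Mb (length u) + 1 + idx u
    else if le_lt_dec (length u) N then idx u
    else if excluded_middle_informative
       (exists R, Run (gT B) R /\ prefix R (length u) = u /\ gA B R) then 0 else 1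
  end.

Definition h (u : list (gM B)) : list nat :=
  map (fun k => val (firstn (S k) u)) (seq 0 (length u)).

Lemma h_len u : length (h u) = length u.
Proof. unfold h. rewrite length_map, length_seq. reflexivity. Qed.

Lemma seq_prefix n : seq 0 n = prefix (fun i => i) n.
Proof. unfold prefix. rewrite map_id. reflexivity. Qed.

Lemma h_firstn u k : k <= length u -> h (firstn k u) = firstn k (h u).
Proof.
  intros Hk. unfold h. rewrite firstn_map, length_firstn.
  replace (Nat.min k (length u)) with k by lia.
  rewrite (seq_prefix (length u)), firstn_prefix by lia. rewrite <- seq_prefix.
  apply map_ext_in. intros i Hi. apply in_seq in Hi. rewrite firstn_firstn. f_equal. f_equal. lia.
Qed.

Lemma h_nth u n : n < length u -> nth n (h u) 0 = val (firstn (S n) u).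
Proof.
  intros Hn. unfold h. rewrite (nth_indep _ _ ((fun k => val (firstn (S k) u)) 0)) by (rewrite length_map, length_seq; lia).
  rewrite (map_nth (fun k => val (firstn (S k) u))), seq_nth by lia. reflexivity.
Qed.

Lemma g_chrono t : gT A t -> gT B (g t) /\ length (g t) = length t /\
    forall k, k <= length t -> g (firstn k t) = firstn k (g t).
Proof. destruct Hg as [H _]. apply H. Qed.
Lemma f_chrono t : gT A t -> length (f t) = length t /\
    forall k, k <= length t -> f (firstn k t) = firstn k (f t).
Proof. destruct Hf as [H _]. intros Ht. destruct (H t Ht) as [_ [H1 H2]]. auto. Qed.
Lemma g_inj s t : gT A s -> gT A t -> g s = g t -> s = t.
Proof. destruct Hg as [_ [H _]]. apply H. Qed.
Lemma f_inj s t : gT A s -> gT A t -> f s = f t -> s = t.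
Proof. destruct Hf as [_ [H _]]. apply H. Qed.
Lemma TA_firstn t k : gT A t -> gT A (firstn k t).
Proof. intros Ht. destruct (le_lt_dec k (length t)).
  - apply (proj1 (gT_tree A)); auto.
  - rewrite firstn_all2 by lia. auto. Qed.
Lemma TB_firstn t k : gT B t -> gT B (firstn k t).
Proof. intros Ht. destruct (le_lt_dec k (length t)).
  - apply (proj1 (gT_tree B)); auto.
  - rewrite firstn_all2 by lia. auto. Qed.

Lemma val_img s : gT A s -> length s > 0 -> val (g s) = nth (length s - 1) (f s) 0.
Proof.
  intros Hs Hl. unfold val. destruct excluded_middle_informative as [p|np].
  - destruct (constructive_indefinite_description _ p) as [s' [Hs' E]]; simpl.
    apply g_inj in E; auto. subst s'. rewrite (proj1 (proj2 (g_chrono s Hs))). reflexivity.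
  - exfalso. apply np. exists s; auto.
Qed.

Lemma hg t : gT A t -> h (g t) = f t.
Proof.
  intros Ht. destruct (g_chrono t Ht) as [_ [Hl Hfi]]. destruct (f_chrono t Ht) as [Hl' Hfi'].
  apply nth_ext with (d := 0) (d' := 0). rewrite h_len; lia.
  intros n Hn. rewrite h_len in Hn. rewrite h_nth by lia.
  rewrite <- Hfi by lia. rewrite val_img; [| apply TA_firstn; auto | rewrite length_firstn; lia].
  rewrite length_firstn. replace (Nat.min (S n) (length t) - 1) with n by lia.
  rewrite Hfi' by lia. rewrite nth_firstn. destruct (Nat.ltb_spec n (S n)); [reflexivity|lia].
Qed.

Lemma img_firstn u k : img u -> img (firstn k u).
Proof.
  intros [s [Hs <-]]. destruct (le_lt_dec k (length s)).
  - exists (firstn k s). split. apply TA_firstn; auto. apply g_chrono; auto.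
  - exists s. split; auto. rewrite firstn_all2; auto. rewrite (proj1 (proj2 (g_chrono s Hs))). lia.
Qed.

Lemma Mb_bound s : gT A s -> length s > 0 -> nth (length s - 1) (f s) 0 <= Mb (length s).
Proof.
  intros Hs Hl. destruct (run_through _ (gT_tree A) s Hs) as [R [HR E]].
  transitivity (nth (length s - 1) (f (prefix R (length s))) 0). rewrite E; lia. unfold Mb.
  apply (le_fold (fun R => nth (length s - 1) (f (prefix R (length s))) 0)). apply HA; auto.
Qed.

Lemma idx_spec u : gT B u -> exists R, nth_error lB (idx u) = Some R /\ prefix R (length u) = u.
Proof.
  intros Hu. unfold idx. destruct excluded_middle_informative as [p|np].
  - exact (proj2_sig (constructive_indefinite_description _ p)).
  - exfalso. apply np. destruct (run_through _ (gT_tree B) u Hu) as [R [HR E]].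
    destruct (In_nth_error _ _ (HB R HR)) as [i Hi]. exists i, R; auto.
Qed.

Lemma uniq_run R1 R2 m : Run (gT B) R1 -> Run (gT B) R2 -> N <= m -> prefix R1 m = prefix R2 m -> R1 = R2.
Proof.
  intros H1 H2 Hm E. apply HN; auto. intros n Hn.
  rewrite <- (nth_prefix R1 m n (R1 0)) by lia. rewrite E. apply nth_prefix. lia.
Qed.

Lemma same_idx u v : gT B u -> gT B v -> length u = length v -> idx u = idx v -> u = v.
Proof.
  intros Hu Hv Hl E. destruct (idx_spec u Hu) as [R1 [E1 P1]]. destruct (idx_spec v Hv) as [R2 [E2 P2]].
  rewrite E in E1. rewrite E1 in E2. injection E2 as <-. rewrite <- P1, <- P2, Hl. reflexivity.
Qed.

Lemma firstn_snoc_len {X} (u : list X) x : firstn (length (u ++ [x]) - 1) (u ++ [x]) = u.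
Proof. rewrite length_app; simpl. replace (length u + 1 - 1) with (length u) by lia.
  rewrite firstn_snoc by lia. apply firstn_all. Qed.

Lemma val_new u x : ~ img (u ++ [x]) -> img u -> val (u ++ [x]) = Mb (S (length u)) + 1 + idx (u ++ [x]).
Proof.
  intros H1 H2. unfold val. destruct excluded_middle_informative as [p|_]. contradiction.
  rewrite firstn_snoc_len. destruct excluded_middle_informative as [_|np]; [|contradiction].
  rewrite length_app. simpl. replace (length u + 1) with (S (length u)) by lia. lia.
Qed.

Lemma val_low u x : ~ img (u ++ [x]) -> ~ img u -> length (u ++ [x]) <= N -> val (u ++ [x]) = idx (u ++ [x]).
Proof.
  intros H1 H2 H3. unfold val. destruct excluded_middle_informative as [p|_]. contradiction.
  rewrite firstn_snoc_len. destruct excluded_middle_informative as [p|_]. contradiction.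
  destruct le_lt_dec; [reflexivity|lia].
Qed.

Lemma step u x y : gT B (u ++ [x]) -> gT B (u ++ [y]) -> val (u ++ [x]) = val (u ++ [y]) -> x = y.
Proof.
  intros Hx Hy E.
  assert (mixed : forall x y, gT B (u ++ [x]) -> gT B (u ++ [y]) -> img (u ++ [x]) -> ~ img (u ++ [y]) ->
     val (u ++ [x]) <> val (u ++ [y])).
  { clear x y Hx Hy E. intros x y Hx Hy [a [Ha Ea]] Hn.
    assert (Hu : img u). { rewrite <- (firstn_snoc_len u x). rewrite <- Ea. apply img_firstn. exists a; auto. }
    rewrite (val_new u y) by auto. rewrite <- Ea.
    assert (La : length a = S (length u)).
    { rewrite <- (proj1 (proj2 (g_chrono a Ha))), Ea, length_app. simpl. lia. }
    rewrite val_img by (auto; lia). pose proof (Mb_bound a Ha ltac:(lia)). rewrite La in *. lia. }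
  destruct (classic (img (u ++ [x]))) as [Ix|Ix]; destruct (classic (img (u ++ [y]))) as [Iy|Iy].
  - destruct Ix as [a [Ha Ea]]. destruct Iy as [b [Hb Eb]].
    assert (a = b). { apply f_inj; auto. rewrite <- (hg a Ha), <- (hg b Hb), Ea, Eb.
      apply nth_ext with (d := 0) (d' := 0). rewrite !h_len, !length_app; reflexivity.
      intros n Hn. rewrite h_len, length_app in Hn. simpl in Hn.
      rewrite !h_nth by (rewrite length_app; simpl; lia).
      destruct (Nat.eq_dec n (length u)) as [->|Hne].
      - rewrite !firstn_all2 by (rewrite length_app; simpl; lia). auto.
      - rewrite !firstn_snoc by lia. reflexivity. }
    subst b. rewrite Ea in Eb. apply app_inj_tail in Eb. destruct Eb; auto.
  - exfalso. exact (mixed x y Hx Hy Ix Iy E).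
  - exfalso. exact (mixed y x Hy Hx Iy Ix (eq_sym E)).
  - destruct (classic (img u)) as [Iu|Iu].
    + rewrite !val_new in E by auto.
      assert (u ++ [x] = u ++ [y]). { apply same_idx; auto. rewrite !length_app; reflexivity. lia. }
      apply app_inj_tail in H. destruct H; auto.
    + destruct (le_lt_dec (length (u ++ [x])) N) as [Hle|Hlt].
      * rewrite !val_low in E by (auto; rewrite length_app in *; simpl in *; lia).
        assert (u ++ [x] = u ++ [y]). { apply same_idx; auto. rewrite !length_app; reflexivity. }
        apply app_inj_tail in H. destruct H; auto.
      * destruct (run_through _ (gT_tree B) _ Hx) as [R1 [HR1 P1]].
        destruct (run_through _ (gT_tree B) _ Hy) as [R2 [HR2 P2]].
        rewrite length_app in P1, P2. simpl in P1, P2.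
        assert (R1 = R2).
        { apply uniq_run with (m := length u); auto. rewrite length_app in Hlt; simpl in Hlt; lia.
          rewrite <- (firstn_prefix R1 (length u) (length u + 1)), <- (firstn_prefix R2 (length u) (length u + 1)) by lia.
          rewrite P1, P2, !firstn_snoc, firstn_all by lia. reflexivity. }
        subst R2. rewrite P1 in P2. apply app_inj_tail in P2. destruct P2; auto.
Qed.


Lemma h_inj n : forall s t, length s = n -> gT B s -> gT B t -> h s = h t -> s = t.
Proof.
  induction n; intros s t Hl Hs Ht E.
  - assert (length t = 0) by (rewrite <- h_len, <- E, h_len; auto).
    apply length_zero_iff_nil in Hl, H. subst; auto.
  - assert (Hlt : length t = S n) by (rewrite <- h_len, <- E, h_len; auto).
    destruct (exists_last (l := s)) as [s' [x Es]]. intros ->; discriminate.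
    destruct (exists_last (l := t)) as [t' [y Et]]. intros ->; discriminate.
    subst s t. rewrite length_app in Hl, Hlt. simpl in Hl, Hlt.
    assert (Hs' : gT B s') by (rewrite <- (firstn_snoc_len s' x); apply TB_firstn; auto).
    assert (Ht' : gT B t') by (rewrite <- (firstn_snoc_len t' y); apply TB_firstn; auto).
    assert (s' = t').
    { apply IHn; auto. lia. rewrite <- (firstn_snoc_len s' x), <- (firstn_snoc_len t' y).
      rewrite !length_app; simpl. replace (length s' + 1 - 1) with n by lia. replace (length t' + 1 - 1) with n by lia.
      rewrite !h_firstn by (rewrite length_app; simpl; lia). rewrite E. reflexivity. }
    subst t'. f_equal. f_equal. apply (step s'); auto.
    assert (Hv : forall z, nth n (h (s' ++ [z])) 0 = val (s' ++ [z])).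
    { intros z. rewrite h_nth by (rewrite length_app; simpl; lia). rewrite firstn_all2; auto.
      rewrite length_app; simpl; lia. }
    rewrite <- !Hv, E. reflexivity.
Qed.

Lemma S_val R Q : induced_run h R Q -> forall n, Q n = val (prefix R (S n)).
Proof.
  intros HI n. rewrite <- (nth_prefix Q (S n) n 0) by lia. rewrite HI.
  rewrite h_nth by (rewrite prefix_length; lia). rewrite firstn_prefix by lia. reflexivity.
Qed.

Lemma val_high R m : Run (gT B) R -> N < m -> ~ img (prefix R m) -> ~ img (prefix R (m - 1)) ->
  (gA B R -> val (prefix R m) = 0) /\ (~ gA B R -> val (prefix R m) = 1).
Proof.
  intros HR Hm H1 H2. unfold val. destruct excluded_middle_informative as [p|_]; [contradiction|].
  rewrite prefix_length, firstn_prefix by lia.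
  destruct excluded_middle_informative as [p|_]; [contradiction|].
  destruct le_lt_dec; [lia|]. split; intros Hw.
  - destruct excluded_middle_informative as [_|np]; auto. exfalso; apply np. exists R; auto.
  - destruct excluded_middle_informative as [[R' [HR' [P W]]]|_]; auto.
    exfalso. assert (R' = R) by (apply uniq_run with (m := m); auto; lia). subst; auto.
Qed.

Lemma run_case R Q : Run (gT B) R -> induced_run h R Q -> (gA B R <-> c00 Q).
Proof.
  intros HR HI.
  destruct (classic (forall n, img (prefix R n))) as [Hall|Hex].
  - pose (s := fun n => proj1_sig (constructive_indefinite_description _ (Hall n))).
    assert (Hs : forall n, gT A (s n) /\ g (s n) = prefix R n).
    { intros n. exact (proj2_sig (constructive_indefinite_description _ (Hall n))). }
    assert (Hsl : forall n, length (s n) = n).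
    { intros n. destruct (Hs n) as [H1 H2]. rewrite <- (proj1 (proj2 (g_chrono _ H1))), H2. apply prefix_length. }
    assert (Hch : forall n, firstn n (s (S n)) = s n).
    { intros n. destruct (Hs n) as [H1 H2]. destruct (Hs (S n)) as [H3 H4].
      apply g_inj; auto. apply TA_firstn; auto.
      rewrite (proj2 (proj2 (g_chrono _ H3))) by (rewrite Hsl; lia). rewrite H4, H2. apply firstn_prefix; lia. }
    assert (Hch2 : forall k n, n <= k -> firstn n (s k) = s n).
    { induction k; intros n Hn.
      - replace n with 0 by lia. rewrite firstn_0. symmetry. apply length_zero_iff_nil, Hsl.
      - destruct (Nat.eq_dec n (S k)) as [->|Hne]. apply firstn_all2. rewrite Hsl; lia.
        rewrite <- (IHk n) by lia. rewrite <- (Hch k), firstn_firstn. f_equal. lia. }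
    destruct (s 1) as [|d0 rest] eqn:E1. { pose proof (Hsl 1) as Hx. rewrite E1 in Hx. discriminate. }
    pose (R' := fun n => nth n (s (S n)) d0).
    assert (HR' : forall n, prefix R' n = s n).
    { intros n. rewrite (prefix_eq_firstn R' (s n) d0 n).
      - apply firstn_all2. rewrite Hsl; lia.
      - intros i Hi. unfold R'. rewrite <- (Hch2 n (S i)) by lia. rewrite nth_firstn.
        destruct (Nat.ltb_spec i (S i)); [reflexivity|lia].
      - rewrite Hsl; lia. }
    assert (RunR' : Run (gT A) R') by (intros n; rewrite HR'; apply Hs).
    assert (Ig : induced_run g R' R) by (intros n; rewrite HR'; symmetry; apply Hs).
    assert (If : induced_run f R' Q).
    { intros n. rewrite HI, HR'. destruct (Hs n) as [H1 H2]. rewrite <- H2. apply hg; auto. }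
    destruct Hg as [_ [_ [[_ gAm] [_ gBm]]]]. destruct Hf as [_ [_ [[_ fAm] [_ fBm]]]].
    split; intros W.
    + apply (fAm R' Q); auto. apply NNPP. intros W'. exact (gBm R' R RunR' Ig W' W).
    + apply NNPP. intros W'. apply (fBm R' Q RunR' If); auto.
      intros W''. exact (W' (gAm R' R RunR' Ig W'')).
  - apply not_all_ex_not in Hex. destruct Hex as [n0 Hn0].
    assert (Hni : forall m, n0 <= m -> ~ img (prefix R m)).
    { intros m Hm Hi. apply Hn0. rewrite <- (firstn_prefix R n0 m Hm). apply img_firstn; auto. }
    assert (Hv : forall m, max n0 N <= m -> (gA B R -> Q m = 0) /\ (~ gA B R -> Q m = 1)).
    { intros m Hm. rewrite (S_val R Q HI m). apply val_high; auto. lia. apply Hni; lia.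
      replace (Datatypes.S m - 1) with m by lia. apply Hni; lia. }
    split; intros W.
    + exists (max n0 N). intros m Hm. apply (Hv m Hm); auto.
    + destruct W as [N0 HN0]. apply NNPP. intros W.
      pose proof (proj2 (Hv (max N0 (max n0 N)) ltac:(lia)) W). rewrite HN0 in H by lia. discriminate.
Qed.

End Constr.

Theorem mainTheorem1 :
  forall (A B : Game), finite_game A -> finite_game B ->
  forall (g : list (gM A) -> list (gM B)) (f : list (gM A) -> list (gM G_FL)),
    game_embedding A B g -> game_embedding A G_FL f ->
    exists h : list (gM B) -> list (gM G_FL),
      game_embedding B G_FL h /\
      forall t, gT A t -> h (g t) = f t.
Proof.
  intros A B [lA HA] [lB HB] g f Hg Hf.
  assert (HA' : forall R, Run (gT A) R -> In R lA).
  { intros R HR. destruct (HA R HR) as [R' [HI E]]. replace R with R'; auto. apply functional_extensionality; intros; auto. }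
  assert (HB' : forall R, Run (gT B) R -> In R lB).
  { intros R HR. destruct (HB R HR) as [R' [HI E]]. replace R with R'; auto. apply functional_extensionality; intros; auto. }
  destruct (sep_all lB) as [N HN].
  exists (h A B g f lA lB N). split.
  - assert (Ch : chronological B G_FL (h A B g f lA lB N)).
    { intros t Ht. split; [exact I|]. split. apply h_len. intros k Hk. apply h_firstn; auto. }
    split; [exact Ch|]. split.
    + intros s t Hs Ht E. exact (h_inj A B g f lA lB N HA' HB' HN Hg Hf (length s) s t eq_refl Hs Ht E).
    + split; split; auto; intros R Q HR HI W.
      * apply (run_case A B g f lA lB N HB' HN Hg Hf R Q HR HI); auto.
      * intros W'. apply W. apply (run_case A B g f lA lB N HB' HN Hg Hf R Q HR HI); auto.
  - intros t Ht. exact (hg A B g f lA lB N Hg Hf t Ht).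
Qed.
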